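(* Consider the $k$-item $k$-bidder environment (any set of at most $k$ bidders may be allocated; there are $k$ real bidders) in which the auctioneer communicates with bidders through private channels, as described in the context, and real bidder values are drawn i.i.d. from the exponential distribution with mean $1$. Then there exists a sufficiently large $k$ such that the Deferred-Revelation Auction (DRA) is not credible for a collateral equal to the monopoly reserve $1$.
   Context: Bidders are quasi-linear with independent values; the exponential distribution with mean $1$ has CDF $1-e^{-t}$, virtual value $v-1$, monopoly reserve $1$. The DRA: every participant (real bidders and any fake bids fabricated by the auctioneer) commits, via a perfectly hiding, perfectly binding, non-malleable commitment scheme, to an identifier and a bid and deposits collateral $f$; the committed bids are later revealed or concealed, and collateral of concealed bids is burnt; then, among revealed bids, the feasible set maximizing the sum of (reported) virtual values is allocated (lexicographic tie-breaking) and each allocated bidder pays its critical bid. Private communication model: there is no public ledger; bidders learn about other bids only through messages from the auctioneer. The auctioneer may show different sets of committed bids to different bidders, may trigger the phases separately for each bidder (e.g. learn some bidders' revealed bids before acting toward others), and may conceal a fake bid from some bidders but reveal it to others; the auctioneer can provably burn the collateral of a concealed fake bid, which costs it $f$ once per fake bid regardless of how many bidders it was shown to. Each bidder's outcome is computed from the bids it has been shown, and the set of real bidders allocated must be feasible. The auctioneer's revenue is real bidders' payments minus burnt collateral. The DRA is credible for collateral $f$ if, when real bidders bid truthfully, the auctioneer maximizes expected revenue by fabricating no bids and behaving honestly. *)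

(* Defs.v *)
From HB Require Import structures.
From mathcomp Require Import all_boot all_order all_algebra.
From mathcomp Require Import all_classical all_reals all_analysis.

Set Implicit Arguments.
Unset Strict Implicit.
Unset Printing Implicit Defensive.

Import Order.TTheory GRing.Theory Num.Theory.
Local Open Scope ring_scope.

Definition expCDF {R : realType} (t : R) : R := 1 - expR (- t).
Definition expPDF {R : realType} (t : R) : R := expR (- t).

Definition vval {R : realType} (t : R) : R := t - (1 - expCDF t) / expPDF t.

(* Monopoly reserve of Exp(1): the zero of the virtual value, i.e. 1. *)
Definition monopoly_reserve {R : realType} : R := 1.

(* Bid identifiers: real bidders 'I_k and fake bids 'I_M.                    *)

Section DRA.
Variables (R : realType) (k M : nat).

Definition bid_id := ('I_k + 'I_M)%type.

Definition feasible (S A : {set bid_id}) : bool := (A \subset S) && (#|A| <= k)%N.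

Definition vwelfare (b : bid_id -> R) (A : {set bid_id}) : R :=
  \sum_(x in A) vval (b x).

(* Allocated set: a feasible set maximizing the virtual welfare, ties broken
   by a fixed deterministic (enumeration-order) rule. *)
Definition dra_alloc (S : {set bid_id}) (b : bid_id -> R) : {set bid_id} :=
  Order.arg_max [set y : bid_id | false] (feasible S) (vwelfare b).

Definition upd (b : bid_id -> R) (i : 'I_k) (x : R) : bid_id -> R :=
  fun y => if y == inl i then x else b y.

Definition crit_bid (i : 'I_k) (S : {set bid_id}) (b : bid_id -> R) : R :=
  inf [set x : R | inl i \in dra_alloc S (upd b i x)]%classic.

(* The auctioneer processes the real bidders in an (adaptively chosen) order;*)
(* when bidder (sorder v t) is processed, the set of committed bids shown to *)
(* it (sview) is fixed, and afterwards the auctioneer learns its revealed    *)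
(* bid. Fake bid x has committed bid value sfake v x. sreveal v i is the set *)
(* of fake bids the auctioneer reveals to bidder i (decided at the end).     *)

Record strategy := Strategy {
  sorder  : k.-tuple R -> 'I_k -> 'I_k;
  sview   : k.-tuple R -> 'I_k -> {set bid_id};
  sfake   : k.-tuple R -> 'I_M -> R;
  sreveal : k.-tuple R -> 'I_k -> {set 'I_M} }.

Definition admissible (s : strategy) : Prop :=
  (forall v, injective (sorder s v)) /\
  (forall v i x, x \in sreveal s v i -> inr x \in sview s v i) /\
  (* non-anticipation: what happens at step t (who is processed, which
     commitments it is shown, and the committed values of the fakes shown)
     depends only on the bids revealed at earlier steps *)
  (forall (v w : k.-tuple R) (t : 'I_k),
      (forall u : 'I_k, (u < t)%N -> tnth v (sorder s v u) = tnth w (sorder s v u)) ->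
      [/\ sorder s w t = sorder s v t,
          sview s w (sorder s v t) = sview s v (sorder s v t) &
          forall x, inr x \in sview s v (sorder s v t) -> sfake s w x = sfake s v x]).

Definition bidv (s : strategy) (v : k.-tuple R) : bid_id -> R :=
  fun y => match y with inl j => tnth v j | inr x => sfake s v x end.

(* revealed bids bidder i has been shown: its own, the real bids whose
   commitments it was shown (real bidders always reveal), and the fake bids
   shown and revealed to it *)
Definition shown (s : strategy) (v : k.-tuple R) (i : 'I_k) : {set bid_id} :=
  inl i |: [set y in sview s v i |
             match y with inl _ => true | inr x => x \in sreveal s v i end].

Definition payment (s : strategy) (v : k.-tuple R) (i : 'I_k) : R :=
  if inl i \in dra_alloc (shown s v i) (bidv s v)
  then crit_bid i (shown s v i) (bidv s v) else 0.

(* fake bids concealed from at least one bidder they were shown to: their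
   collateral is burnt (once per fake bid) *)
Definition burnt (s : strategy) (v : k.-tuple R) : {set 'I_M} :=
  [set x | [exists i, (inr x \in sview s v i) && (x \notin sreveal s v i)]].

Definition revenue (f : R) (s : strategy) (v : k.-tuple R) : R :=
  \sum_(i < k) payment s v i - f *+ #|burnt s v|.

End DRA.

Definition honest (R : realType) (k : nat) : strategy R k 0 :=
  @Strategy R k 0 (fun _ t => t)
    (fun _ i => [set y : bid_id k 0 | if y is inl j then j != i else false])
    (fun _ _ => 0) (fun _ _ => [set x : 'I_0 | false]).

Fixpoint expE {R : realType} (n : nat) : (n.-tuple R -> R) -> \bar R :=
  match n return (n.-tuple R -> R) -> \bar R with
  | 0 => fun g => (g [tuple])%:E
  | n'.+1 => fun g =>
      (\int[exponential_prob (1 : R)]_(t in [set: R]%classic)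
          expE (fun s : n'.-tuple R => g [tuple of t :: s]))%E
  end.

Definition credible (R : realType) (f : R) (k : nat) : Prop :=
  forall (M : nat) (s : strategy R k M),
    admissible s ->
    measurable_fun [set: k.-tuple R]%classic (revenue f s) ->
    (expE (revenue f s) <= expE (revenue f (honest R k)))%E.

(* Main.v *)
Set Warnings "-notation-overridden,-ambiguous-paths,-notation-incompatible-prefix,-deprecated".
From HB Require Import structures.
Require Import Defs.
From mathcomp Require Import all_boot all_order all_algebra.
From mathcomp Require Import all_classical all_reals all_analysis.
From mathcomp Require Import ring lra measurable_realfun.
Import Order.TTheory GRing.Theory Num.Theory.
Set Implicit Arguments.
Unset Strict Implicit.
Unset Printing Implicit Defensive.
Local Open Scope ring_scope.

Lemma vvalE (R : realType) (t : R) : vval t = t - 1.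
Proof.
rewrite /vval /expCDF /expPDF opprB addrCA subrr addr0 divff //.
by rewrite gt_eqF // expR_gt0.
Qed.

Section Alloc.
Variables (R : realType) (k M : nat).
Implicit Types (S A : {set bid_id k M}) (b : bid_id k M -> R).

Lemma alloc_spec S b :
  feasible S (dra_alloc S b) /\
  forall B, feasible S B -> vwelfare b B <= vwelfare b (dra_alloc S b).
Proof.
have h0 : feasible S [set y : bid_id k M | false].
  rewrite (_ : [set y : bid_id k M | false] = finset.set0); last by apply/setP => y; rewrite !inE.
  by rewrite /feasible finset.sub0set finset.cards0.
rewrite /dra_alloc; case: (arg_maxP (vwelfare b) h0) => A HA Hmax.
by split => // B HB; apply: Hmax.
Qed.

Lemma alloc_in S b y : y \in S -> 0 < vval (b y) ->
  (forall A, feasible S A -> y \notin A ->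
     (#|A| < k)%N \/ exists2 z, z \in A & vval (b z) < vval (b y)) ->
  y \in dra_alloc S b.
Proof.
move=> yS hy H; apply/negPn/negP => yA.
have [hf Hmax] := alloc_spec S b.
set A := dra_alloc S b in yA hf Hmax.
have fA := hf; move: hf; rewrite /feasible => /andP [AS Ak].
case: (H A fA yA) => [Alt|[z zA hz]].
  have := Hmax (y |: A); rewrite /vwelfare big_setU1 //=.
  have -> : feasible S (y |: A).
    rewrite /feasible finset.subUset finset.sub1set yS AS cardsU1 yA /=.
    by rewrite add1n.
  move=> /(_ isT); rewrite -/(vwelfare b A); lra.
have yAz : y \notin A :\ z by rewrite !inE negb_and yA orbT.
have := Hmax (y |: (A :\ z)); rewrite /vwelfare big_setU1 //=.
have -> : feasible S (y |: (A :\ z)).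
  rewrite /feasible finset.subUset finset.sub1set yS (fintype.subset_trans (finset.subsetDl _ _) AS) /=.
  by rewrite cardsU1 yAz (cardsD1 z A) zA in Ak *.
move=> /(_ isT); rewrite [X in _ <= X](big_setD1 z zA) /=; lra.
Qed.

Lemma alloc_out S b y :
  (forall A, feasible S A -> y \in A ->
     vval (b y) < 0 \/ exists z, [/\ z \in S, z \notin A & vval (b y) < vval (b z)]) ->
  y \notin dra_alloc S b.
Proof.
move=> H; apply/negP => yA.
have [hf Hmax] := alloc_spec S b.
set A := dra_alloc S b in yA hf Hmax.
have fA := hf; move: hf; rewrite /feasible => /andP [AS Ak].
case: (H A fA yA) => [hy|[z [zS zA hz]]].
  have := Hmax (A :\ y); rewrite /vwelfare [X in _ <= X](big_setD1 y yA) /=.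
  have -> : feasible S (A :\ y).
    rewrite /feasible (fintype.subset_trans (finset.subsetDl _ _) AS) /=.
    by apply: leq_trans Ak; apply: subset_leq_card; apply: finset.subsetDl.
  move=> /(_ isT); lra.
have zAy : z \notin A :\ y by rewrite !inE negb_and zA orbT.
have := Hmax (z |: (A :\ y)); rewrite /vwelfare big_setU1 //=.
have -> : feasible S (z |: (A :\ y)).
  rewrite /feasible finset.subUset finset.sub1set zS (fintype.subset_trans (finset.subsetDl _ _) AS) /=.
  by rewrite cardsU1 zAy (cardsD1 y A) yA in Ak *.
move=> /(_ isT); rewrite [X in _ <= X](big_setD1 y yA) /=; lra.
Qed.


Lemma upd_self b i : upd b i (b (inl i)) = b.
Proof. by apply: funext => y; rewrite /upd; case: eqP => [->|]. Qed.

Lemma upd_i b i x : upd b i x (inl i) = x.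
Proof. by rewrite /upd eqxx. Qed.

Lemma upd_o b i x z : z != inl i -> upd b i x z = b z.
Proof. by rewrite /upd => /negbTE ->. Qed.

Lemma small_in S b i x : inl i \in S -> (#|S :\ inl i| < k)%N -> 1 < x ->
  inl i \in dra_alloc S (upd b i x).
Proof.
move=> iS Sk x1; apply: alloc_in => //; first by rewrite upd_i vvalE subr_gt0.
move=> A /andP [AS Ak] iA; left; apply: leq_ltn_trans Sk.
by apply: subset_leq_card; rewrite finset.subsetD1 AS iA.
Qed.

Lemma small_out S b i x : x < 1 -> inl i \notin dra_alloc S (upd b i x).
Proof.
move=> x1; apply: alloc_out => A _ _; left; by rewrite upd_i vvalE subr_lt0.
Qed.

Hypothesis k0 : (0 < k)%N.

Lemma large_in S b i x : inl i \in S -> (k <= #|S :\ inl i|)%N ->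
  (forall z, z \in S -> z != inl i -> b z = 2) -> 2 < x ->
  inl i \in dra_alloc S (upd b i x).
Proof.
move=> iS Sk Sb x2; apply: alloc_in => //; first by rewrite upd_i vvalE subr_gt0; lra.
move=> A /andP [AS Ak] iA; case: (ltnP #|A| k) => hA; first by left.
right; have : (0 < #|A|)%N by apply: leq_trans hA.
rewrite card_gt0 => /finset.set0Pn [z zA]; exists z => //.
have ziz : z != inl i by apply: contraNneq iA => <-.
have zS : z \in S by move/fintype.subsetP: AS; apply.
by rewrite (upd_o _ _ ziz) upd_i (Sb z zS ziz) !vvalE; lra.
Qed.

Lemma large_out S b i x : (k <= #|S :\ inl i|)%N ->
  (forall z, z \in S -> z != inl i -> b z = 2) -> x < 2 ->
  inl i \notin dra_alloc S (upd b i x).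
Proof.
move=> Sk Sb x2; apply: alloc_out => A /andP [AS Ak] iA; right.
have : ~~ (S :\ inl i \subset A :\ inl i).
  apply/negP => /subset_leq_card h.
  move: Ak; rewrite (cardsD1 (inl i) A) iA add1n => Ak.
  by have := leq_trans Sk h; rewrite leqNgt Ak.
case/fintype.subsetPn => z; rewrite !inE => /andP [ziz zS].
rewrite ziz /= => zA; exists z; split => //.
by rewrite (upd_o _ _ ziz) upd_i (Sb z zS ziz) !vvalE; lra.
Qed.

End Alloc.

Lemma inf_thr (R : realType) (c : R) (W : set R) :
  (forall x, c < x -> W x) -> (forall x, x < c -> ~ W x) -> inf W = c.
Proof.
move=> hin hout.
have lb : lbound W c.
  by move=> x Wx; rewrite leNgt; apply/negP => /hout.
have ne : nonempty W by exists (c + 1); apply: hin; lra.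
have hlb : has_lbound W by exists c.
have h1 : c <= inf W by apply: lb_le_inf.
apply/eqP; rewrite eq_le h1 andbT leNgt; apply/negP => cI.
have : inf W <= (c + inf W) / 2 by apply: ge_inf => //; apply: hin; lra.
lra.
Qed.

Lemma crit_small (R : realType) k M (S : {set bid_id k M}) (b : bid_id k M -> R) i :
  inl i \in S -> (#|S :\ inl i| < k)%N -> crit_bid i S b = 1.
Proof.
move=> iS Sk; rewrite /crit_bid; apply: inf_thr => x hx /=.
  exact: small_in.
by apply/negP; apply: small_out.
Qed.

Lemma crit_large (R : realType) k M (S : {set bid_id k M}) (b : bid_id k M -> R) i :
  (0 < k)%N -> inl i \in S -> (k <= #|S :\ inl i|)%N ->
  (forall z, z \in S -> z != inl i -> b z = 2) -> crit_bid i S b = 2.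
Proof.
move=> k0 iS Sk Sb; rewrite /crit_bid; apply: inf_thr => x hx /=.
  exact: large_in.
by apply/negP; apply: large_out.
Qed.
Set Implicit Arguments.
Unset Strict Implicit.
Unset Printing Implicit Defensive.
Local Open Scope ring_scope.

Section Strat.
Variables (R : realType) (K : nat).
Local Notation k := K.+1.

Definition sstrat : strategy R k k :=
  @Strategy R k k (fun _ t => t)
    (fun _ _ => [set y : bid_id k k | if y is inr _ then true else false])
    (fun _ _ => 2)
    (fun v i => if (1 < tnth v i) && (tnth v i <= 2) then [set x : 'I_k | x != ord0]
                else [set x : 'I_k | true]).

Lemma sstrat_adm : admissible sstrat.
Proof.
split; first by move=> v x y.
split; first by move=> v i x _; rewrite inE.
by move=> v w t _; split.
Qed.

Lemma shown_two v i z : z \in shown sstrat v i -> z != inl i -> bidv sstrat v z = 2.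
Proof.
rewrite /shown !inE => /orP [/eqP -> |]; first by rewrite eqxx.
by case: z.
Qed.

Lemma shown_i v i : inl i \in shown sstrat v i.
Proof. by rewrite /shown !inE eqxx. Qed.

Lemma shown_large v i : ~~ ((1 < tnth v i) && (tnth v i <= 2)) ->
  (k <= #|shown sstrat v i :\ inl i|)%N.
Proof.
move=> h.
apply: (@leq_trans #|(@inr 'I_k 'I_k) @: [set x : 'I_k | true]|).
  rewrite card_imset; last by move=> x y [].
  by rewrite (_ : [set x : 'I_k | true] = finset.setT) ?cardsT ?card_ord //; apply/setP => x; rewrite !inE.
apply: subset_leq_card; apply/fintype.subsetP => z /imsetP [x _ ->].
by rewrite /shown !inE /= (negbTE h) inE.
Qed.

Lemma shown_small v i : (1 < tnth v i) && (tnth v i <= 2) ->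
  (#|shown sstrat v i :\ inl i| < k)%N.
Proof.
move=> h.
apply: (@leq_ltn_trans #|(@inr 'I_k 'I_k) @: [set x : 'I_k | x != ord0]|).
  apply: subset_leq_card; apply/fintype.subsetP => z.
  rewrite /shown !inE /= h; case: z => [j|x] /=.
    by rewrite orbF => /andP [/negbTE ->].
  by rewrite inE => hx; apply/imsetP; exists x; rewrite // inE.
rewrite card_imset; last by move=> x y [].
rewrite (_ : [set x : 'I_k | x != ord0] = [set~ ord0]); last by apply/setP => x; rewrite !inE.
by rewrite cardsC1 card_ord.
Qed.

Definition Qf (t : R) : R := (if 1 < t then 1 else 0) + (if 2 < t then 1 else 0).

Lemma pay_s v i : payment sstrat v i = Qf (tnth v i).
Proof.
have bi : bidv sstrat v (inl i) = tnth v i by [].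
have E : dra_alloc (shown sstrat v i) (bidv sstrat v) =
  dra_alloc (shown sstrat v i) (upd (bidv sstrat v) i (tnth v i)) by rewrite -bi upd_self.
rewrite /payment E /Qf.
case: (boolP ((1 < tnth v i) && (tnth v i <= 2))) => h.
  move/andP: (h) => [h1 h2].
  rewrite small_in ?shown_i ?shown_small // crit_small ?shown_i ?shown_small //.
  by rewrite h1 ltNge h2 /= addr0.
have Sb z : z \in shown sstrat v i -> z != inl i -> bidv sstrat v z = 2.
  exact: shown_two.
case: (ltrP 2 (tnth v i)) => h2.
  rewrite large_in ?shown_i ?shown_large // crit_large ?shown_i ?shown_large //.
  by rewrite ifT //; lra.
rewrite (negbTE (large_out (shown_large h) Sb _)); last first.
  by move: h; rewrite h2 andbT -leNgt => h; lra.
by move: h; rewrite h2 andbT -leNgt => h; rewrite ltNge h /= addr0.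
Qed.

End Strat.

Section Burnt.
Variables (R : realType) (K : nat).
Local Notation k := K.+1.

Definition Eset : set (k.-tuple R) :=
  (\bigcup_(i in [set: 'I_k]) ((fun v : k.-tuple R => tnth v i) @^-1` [set` `]1, 2]%R]))%classic.

Lemma burnt_s v : burnt (sstrat R K) v =
  if [exists i, (1 < tnth v i) && (tnth v i <= 2)] then finset.set1 ord0 else finset.set0.
Proof.
apply/setP => x; rewrite /burnt /= !inE; case: ifP.
  move=> /existsP [i hi]; rewrite finset.in_set1; apply/idP/idP.
    by case/existsP => j; rewrite /=; case: ifP => _; rewrite !inE // negbK.
  move=> /eqP ->; apply/existsP; exists i; by rewrite hi !inE negbK.
move=> hn; rewrite finset.in_set0; apply/negbTE/existsP => -[j].
rewrite /=; case: ifP => hj; last by rewrite inE.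
by move: hn; rewrite (introT existsP (ex_intro _ j hj)).
Qed.

Lemma rev_s v : revenue 1 (sstrat R K) v =
  \sum_(i < k) Qf (tnth v i) - (\1_Eset v : R).
Proof.
rewrite /revenue; congr (_ - _); first by apply: eq_bigr => i _; rewrite pay_s.
rewrite burnt_s indicE; case: ifP => h.
  rewrite cards1 mem_set //; move/existsP: h => [i hi]; exists i => //=.
rewrite finset.cards0 memNset //; case => i _ /=; rewrite in_itv /= => hi.
by move: h; rewrite (introT existsP (ex_intro _ i hi)).
Qed.

End Burnt.
Set Implicit Arguments.
Unset Strict Implicit.
Unset Printing Implicit Defensive.
Local Open Scope ring_scope.
Local Open Scope classical_set_scope.

Section Meas.
Variables (R : realType) (K : nat).
Local Notation k := K.+1.

Definition A1 : set R := [set` `]1, +oo[%R].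
Definition A2 : set R := [set` `]2, +oo[%R].

Lemma QfE t : Qf t = \1_A1 t + \1_A2 t.
Proof.
rewrite /Qf !indicE /A1 /A2 !(mem_setE) /= !in_itv /= !andbT.
by case: ifP; case: ifP.
Qed.

Lemma mQf : measurable_fun [set: R] (@Qf R).
Proof.
rewrite (_ : @Qf R = fun t => \1_A1 t + \1_A2 t); last by apply: funext => t; rewrite QfE.
by apply: measurable_funD; apply: measurable_indic; apply: measurable_itv.
Qed.

Lemma mEset : measurable (@Eset R K).
Proof.
apply: fin_bigcup_measurable; first exact: finite_finset.
move=> i _; rewrite -[X in measurable X]setTI.
by apply: (measurable_tnth i) => //; apply: measurable_itv.
Qed.

Lemma m_rev_s : measurable_fun [set: k.-tuple R] (revenue 1 (sstrat R K)).
Proof.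
rewrite (_ : revenue 1 _ = fun v => \sum_(i < k) Qf (tnth v i) - (\1_(@Eset R K) v : R));
  last by apply: funext => v; rewrite rev_s.
apply: measurable_funB; last exact: measurable_indic mEset.
apply: measurable_sum => i.
by apply: measurableT_comp; [exact: mQf | exact: measurable_tnth].
Qed.

End Meas.
Set Implicit Arguments.
Unset Strict Implicit.
Unset Printing Implicit Defensive.
Local Open Scope ring_scope.
Local Open Scope classical_set_scope.

Section Honest.
Variables (R : realType) (K : nat).
Local Notation k := K.+1.

Definition A0 : set R := [set` `[1, +oo[%R].

Lemma pay_h v i : payment (honest R k) v i <= \1_A0 (tnth v i).
Proof.
have Sk : (#|shown (honest R k) v i :\ inl i| < k)%N.
  apply: (@leq_ltn_trans #|~: finset.set1 (inl i : bid_id k 0)|).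
    apply: subset_leq_card; apply/fintype.subsetP => z; rewrite !inE.
    by case/andP => ->.
  by rewrite cardsC1 card_sum !card_ord addn0.
have iS : inl i \in shown (honest R k) v i by rewrite /shown !inE eqxx.
have bi : bidv (honest R k) v (inl i) = tnth v i by [].
have E : dra_alloc (shown (honest R k) v i) (bidv (honest R k) v) =
  dra_alloc (shown (honest R k) v i) (upd (bidv (honest R k) v) i (tnth v i)).
  by rewrite -bi upd_self.
rewrite /payment E indicE /A0 mem_setE in_itv /= andbT.
case: (ltrP (tnth v i) 1) => h.
  by rewrite (negbTE (small_out _ _ _ h)) lexx.
case: ifP => _ //; by rewrite crit_small.
Qed.

Lemma rev_h v : revenue 1 (honest R k) v <= 0 + \sum_(i < k) \1_A0 (tnth v i).
Proof.
rewrite /revenue add0r.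
have -> : #|burnt (honest R k) v| = 0%N.
  by apply/eqP; rewrite -leqn0; apply: leq_trans (max_card _) _; rewrite card_ord.
rewrite mulr0n subr0; apply: ler_sum => i _; exact: pay_h.
Qed.

Lemma rev_s_ge v : - 1 + \sum_(i < k) Qf (tnth v i) <= revenue 1 (sstrat R K) v.
Proof.
rewrite rev_s addrC lerD2l lerN2 indicE.
by case: (_ \in _).
Qed.

End Honest.
Set Implicit Arguments.
Unset Strict Implicit.
Unset Printing Implicit Defensive.
Local Open Scope ring_scope.
Local Open Scope classical_set_scope.

Lemma int_mono (R : realType) d (T : measurableType d) (mu : set T -> \bar R) (D : set T)
  (f g : T -> \bar R) : (forall x, (f x <= g x)%E) ->
  (\int[mu]_(x in D) f x <= \int[mu]_(x in D) g x)%E.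
Proof.
move=> fg; rewrite /integral; apply: leeB; apply: le_ereal_sup => _ /= [h hf <-];
  exists h => //= x; apply: (le_trans (hf x)).
  rewrite !funeposE /patch; case: ifP => _ //; apply: le_max2 => //.
rewrite !funenegE /patch; case: ifP => _ //; apply: le_max2 => //.
by rewrite leeN2.
Qed.

Lemma expE_mono (R : realType) n (g h : n.-tuple R -> R) :
  (forall v, g v <= h v) -> (expE g <= expE h)%E.
Proof.
elim: n g h => [|n IH] g h gh /=; first by rewrite lee_fin.
apply: int_mono => t; apply: IH => s; exact: gh.
Qed.

Section Inst.
Variable R : realType.
Definition ex1 := exponential_prob (1:R).
Lemma ex1_0 : ex1 set0 = 0%E.
Proof. by rewrite /ex1 /exponential_prob integral_set0. Qed.
Lemma ex1_ge0 A : (0 <= ex1 A)%E.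
Proof.
rewrite /ex1 /exponential_prob integral_ge0//= => x _.
by rewrite lee_fin exponential_pdf_ge0// ler01.
Qed.
Lemma ex1_sa : semi_sigma_additive ex1.
Proof.
move=> /= F mF tF mUF; rewrite /ex1 /exponential_prob; apply: cvg_toP.
  apply: ereal_nondecreasing_is_cvgn => m n mn.
  apply: lee_sum_nneg_natr => // k _ _; apply: integral_ge0 => /= x Fkx.
  by rewrite lee_fin exponential_pdf_ge0// ler01.
rewrite ge0_integral_bigcup//=.
- apply: (measurable_funS measurableT) => //.
  apply/measurable_realfun.measurable_EFinP; exact: measurable_exponential_pdf.
- by move=> x _; rewrite lee_fin exponential_pdf_ge0// ler01.
Qed.
HB.instance Definition _ := isMeasure.Build _ _ _ ex1 ex1_0 ex1_ge0 ex1_sa.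
Lemma ex1_T : ex1 [set: R] = 1%E.
Proof. by rewrite /ex1 /exponential_prob integral_exponential_pdf. Qed.
HB.instance Definition _ := @Measure_isProbability.Build _ _ R ex1 ex1_T.
End Inst.

Lemma expE_sum (R : realType) n (phi : R -> R) (e a : R) :
  (@ex1 R).-integrable setT (EFin \o phi) ->
  (\int[@ex1 R]_x (phi x)%:E = e%:E)%E ->
  expE (fun v : n.-tuple R => a + \sum_(i < n) phi (tnth v i)) = (a + n%:R * e)%:E.
Proof.
move=> hi he; elim: n a => [|n IH] a /=; first by rewrite big_ord0 mul0r.
rewrite -[exponential_prob 1]/(@ex1 R).
transitivity (\int[@ex1 R]_(t in setT) ((EFin \o cst (a + n%:R * e)%R) t + (EFin \o phi) t))%E.
  apply: eq_integral => t _.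
  rewrite (_ : (fun s : n.-tuple R => _) =
     (fun s : n.-tuple R => ((a + phi t) + \sum_(i < n) phi (tnth s i))%R)).
    by rewrite IH /= -EFinD addrAC.
  apply: funext => s; rewrite big_ord_recl tnth0 addrA; congr (_ + _).
  by apply: eq_bigr => i _; rewrite tnthS.
rewrite integralD //; last exact: finite_measure_integrable_cst.
rewrite he (_ : EFin \o cst (a + n%:R * e) = cst (a + n%:R * e)%:E) //.
rewrite integral_cst // [X in (_ * X)%E]ex1_T mule1.
rewrite -EFinD mulrSr.
congr EFin; ring.
Qed.

Section Probs.
Variable R : realType.
Local Notation P := (@ex1 R).

Lemma ex1_gt (x : R) : 0 < x -> P [set` `]x, +oo[%R] = (expR (- x))%:E.
Proof.
move=> x0.
have mA : measurable [set` `]x, +oo[%R] by exact: measurable_itv.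
rewrite -(setCK [set` `]x, +oo[%R]) probability_setC; last exact: measurableC.
have -> : ~` [set` `]x, +oo[%R] = [set` `]-oo, 0[%R] `|` [set` `[0, x]%R].
  apply/seteqP; split => t /=.
    rewrite in_itv /= andbT => /negP h; rewrite -leNgt in h.
    case: (ltrP t 0) => h0; [left|right]; rewrite /= in_itv /= ?h0 //.
  rewrite !in_itv /= andbT => -[h|/andP [_ h]]; apply/negP; rewrite -leNgt; lra.
rewrite measureU //; first last.
- apply/seteqP; split => t //=; rewrite !in_itv /= => -[h1 /andP [h2 _]]; lra.
have E0 : P [set` `]-oo, 0[%R] = 0%E.
  rewrite /ex1 /exponential_prob integral0_eq // => t /=; rewrite in_itv /= => h.
  by rewrite lt0_exponential_pdf.
have E1 : P [set` `[0, x]%R] = (1 - (expR (- x))%:E)%E.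
  by rewrite /ex1 exponential_prob_itv0c // mulNr mul1r.
rewrite [X in (1 - (X + _))%E]E0 [X in (1 - (_ + X))%E]E1 add0e.
by rewrite -[1%E]/(1%:E) -!EFinB; congr EFin; ring.
Qed.

Lemma ex1_ge1 : P [set` `[1, +oo[%R] = P [set` `]1, +oo[%R].
Proof.
have -> : [set` `[1, +oo[%R] = [set (1:R)] `|` [set` `]1, +oo[%R].
  apply/seteqP; split => t /=; rewrite !in_itv /= !andbT.
    by rewrite le_eqVlt => /orP [/eqP ->|h]; [left|right].
  by case => [->|h]; [rewrite lexx | rewrite ltW].
rewrite measureU //; first last.
- by apply/seteqP; split => t //=; rewrite !in_itv /= => -[-> ]; rewrite ltxx.
have E : P [set 1] = 0%E by rewrite /ex1 /exponential_prob integral_set1.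
by rewrite [X in (X + _ = _)%E]E add0e.
Qed.

End Probs.

Section Final.
Variable R : realType.
Local Notation P := (@ex1 R).

Lemma int_indic1 (A : set R) : measurable A ->
  (\int[P]_x (\1_A x)%:E = P A)%E.
Proof. by move=> mA; rewrite integral_indic // setIT. Qed.

Lemma integrable_Q : P.-integrable setT (EFin \o (@Qf R)).
Proof.
rewrite (_ : EFin \o @Qf R = (fun x => (\1_(@A1 R) x)%:E) \+ (fun x => (\1_(@A2 R) x)%:E))%E; last first.
  by apply: funext => x /=; rewrite QfE EFinD.
by apply: integrableD => //; apply: integrable_indic; apply: measurable_itv.
Qed.

Lemma int_Q : (\int[P]_x (Qf x)%:E = (expR (-1) + expR (-2))%:E)%E.
Proof.
transitivity (\int[P]_x ((\1_(@A1 R) x)%:E + (\1_(@A2 R) x)%:E))%E.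
  by apply: eq_integral => x _; rewrite QfE EFinD.
rewrite integralD //; try by apply: integrable_indic; apply: measurable_itv.
rewrite !int_indic1; try exact: measurable_itv.
by rewrite /A1 /A2 !ex1_gt // EFinD.
Qed.

Lemma integrable_U : P.-integrable setT (EFin \o (\1_(@A0 R) : R -> R)).
Proof. by apply: integrable_indic; apply: measurable_itv. Qed.

Lemma int_U : (\int[P]_x (\1_(@A0 R) x)%:E = (expR (-1))%:E)%E.
Proof.
by rewrite int_indic1 /A0 ?ex1_ge1 ?ex1_gt //; apply: measurable_itv.
Qed.

Lemma expR2_ge : 1 / 16 <= expR (-2 : R).
Proof.
have -> : (-2 : R) = 4%:R * (- (1/2)) by rewrite mulrN; congr (- _); field.
rewrite expRM_natl.
have h := expR_ge1Dx (- (1/2) : R).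
set y := expR _ in h *.
have y2 : 1/2 <= y by lra.
have y4 : 1/4 <= y * y by nra.
have e : y ^+ 4 = (y * y) * (y * y) by rewrite !exprS expr0 mulr1; ring.
rewrite e; nra.
Qed.

End Final.

Theorem mainTheorem8 (R : realType) :
  exists k : nat, ~ credible (@monopoly_reserve R) k.
Proof.
exists 17%N => H.
have := H 17%N (@sstrat R 16) (@sstrat_adm R 16) (@m_rev_s R 16).
apply/negP; rewrite -ltNge.
apply: (@le_lt_trans _ _ (expE (fun v : 17.-tuple R => 0 + \sum_(i < 17) \1_(@A0 R) (tnth v i)))).
  by apply: expE_mono => v; apply: rev_h.
apply: (@lt_le_trans _ _ (expE (fun v : 17.-tuple R => - 1 + \sum_(i < 17) Qf (tnth v i)))); last first.
  by apply: expE_mono => v; apply: rev_s_ge.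
rewrite (expE_sum _ _ (integrable_U R) (int_U R)) (expE_sum _ _ (integrable_Q R) (int_Q R)) lte_fin.
have := @expR2_ge R; lra.
Qed.
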